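(* Let $Y$ be a real Banach space with a finite-dimensional decomposition $(Q_j)_{j\ge1}$ and let $X$ be a closed subspace of $Y$. Then for every $\delta>0$ there exists an invertible bounded operator $T:Y\to Y$ with $\|T-I\|<\delta$ such that $X$ satisfies the density condition with respect to the FDD $(TQ_jT^{-1})_{j\ge1}$.
   Context: A finite-dimensional decomposition (FDD) of $Y$ is a sequence of finite-rank projections $(Q_j)_{j\ge1}$ with $Q_iQ_j=0$ for $i\ne j$ and $y=\sum_j Q_jy$ for all $y\in Y$. A subspace $X$ of $Y$ satisfies the density condition with respect to the FDD $(Q_j)$ if there is a dense subset $D$ of $X$ such that for every $x\in D$ there is $n=n(x)\in\mathbb N$ with $x=\sum_{j=1}^nQ_jx$. *)

(* Defs.v *)
From Stdlib Require Import Reals.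
Open Scope R_scope.

Record BanachSpace := {
  bs_car :> Type;
  bs_zero : bs_car;
  bs_add : bs_car -> bs_car -> bs_car;
  bs_opp : bs_car -> bs_car;
  bs_scal : R -> bs_car -> bs_car;
  bs_norm : bs_car -> R;
  bs_add_assoc : forall x y z, bs_add x (bs_add y z) = bs_add (bs_add x y) z;
  bs_add_comm : forall x y, bs_add x y = bs_add y x;
  bs_add_zero : forall x, bs_add x bs_zero = x;
  bs_add_opp : forall x, bs_add x (bs_opp x) = bs_zero;
  bs_scal_assoc : forall a b x, bs_scal a (bs_scal b x) = bs_scal (a * b) x;
  bs_scal_one : forall x, bs_scal 1 x = x;
  bs_scal_distr_l : forall a x y,
      bs_scal a (bs_add x y) = bs_add (bs_scal a x) (bs_scal a y);
  bs_scal_distr_r : forall a b x,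
      bs_scal (a + b) x = bs_add (bs_scal a x) (bs_scal b x);
  bs_norm_eq0 : forall x, bs_norm x = 0 -> x = bs_zero;
  bs_norm_scal : forall a x, bs_norm (bs_scal a x) = Rabs a * bs_norm x;
  bs_norm_triangle : forall x y, bs_norm (bs_add x y) <= bs_norm x + bs_norm y;
  bs_complete : forall u : nat -> bs_car,
      (forall eps, 0 < eps -> exists N, forall m n, (N <= m)%nat -> (N <= n)%nat ->
          bs_norm (bs_add (u m) (bs_opp (u n))) < eps) ->
      exists l, forall eps, 0 < eps -> exists N, forall n, (N <= n)%nat ->
          bs_norm (bs_add (u n) (bs_opp l)) < eps
}.

Arguments bs_zero {b0}.
Arguments bs_add {b0}.
Arguments bs_opp {b0}.
Arguments bs_scal {b0}.
Arguments bs_norm {b0}.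

Section Ops.
Variable Y : BanachSpace.

Definition dist (x y : Y) : R := bs_norm (bs_add x (bs_opp y)).

Definition converges_to (u : nat -> Y) (l : Y) : Prop :=
  forall eps, 0 < eps -> exists N, forall n, (N <= n)%nat -> dist (u n) l < eps.

Definition is_linear (T : Y -> Y) : Prop :=
  (forall x y, T (bs_add x y) = bs_add (T x) (T y)) /\
  (forall a x, T (bs_scal a x) = bs_scal a (T x)).

Definition is_bounded (T : Y -> Y) : Prop :=
  exists C, forall x, bs_norm (T x) <= C * bs_norm x.

Definition bounded_operator (T : Y -> Y) : Prop := is_linear T /\ is_bounded T.

Definition is_inverse_op (T S : Y -> Y) : Prop :=
  bounded_operator S /\ (forall x, S (T x) = x) /\ (forall x, T (S x) = x).

(* operator norm of T - I is < delta (the supremum of ||Tx - x|| over the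
   unit ball is < delta iff it is bounded by some c < delta) *)
Definition opnorm_T_minus_I_lt (T : Y -> Y) (delta : R) : Prop :=
  exists c, c < delta /\ forall x, bs_norm (bs_add (T x) (bs_opp x)) <= c * bs_norm x.

Fixpoint lincomb (c : nat -> R) (v : nat -> Y) (n : nat) : Y :=
  match n with
  | O => bs_zero
  | S k => bs_add (lincomb c v k) (bs_scal (c k) (v k))
  end.

Definition finite_rank (P : Y -> Y) : Prop :=
  exists n (v : nat -> Y), forall x, exists c : nat -> R, P x = lincomb c v n.

Definition finite_rank_projection (P : Y -> Y) : Prop :=
  bounded_operator P /\ finite_rank P /\ (forall x, P (P x) = P x).

Fixpoint psum (Q : nat -> Y -> Y) (y : Y) (n : nat) : Y :=
  match n with
  | O => bs_zero
  | S k => bs_add (psum Q y k) (Q k y)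
  end.

(* finite-dimensional decomposition (indexed from 0 instead of 1) *)
Definition is_FDD (Q : nat -> Y -> Y) : Prop :=
  (forall j, finite_rank_projection (Q j)) /\
  (forall i j, i <> j -> forall x, Q i (Q j x) = bs_zero) /\
  (forall y, converges_to (psum Q y) y).

Definition closed_subspace (X : Y -> Prop) : Prop :=
  X bs_zero /\
  (forall x y, X x -> X y -> X (bs_add x y)) /\
  (forall a x, X x -> X (bs_scal a x)) /\
  (forall u l, (forall n, X (u n)) -> converges_to u l -> X l).

Definition density_condition (X : Y -> Prop) (Q : nat -> Y -> Y) : Prop :=
  exists D : Y -> Prop,
    (forall x, D x -> X x) /\
    (forall x, X x -> forall eps, 0 < eps -> exists d, D d /\ dist x d < eps) /\
    (forall x, D x -> exists n, x = psum Q x n).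

End Ops.

Arguments dist {Y}.

(* Main.v *)
Require Import Defs.
From Stdlib Require Import Reals Lra Lia ClassicalEpsilon Classical ZArith Cantor.
Open Scope R_scope.


Section Basics.
Variable Y : BanachSpace.
Local Notation "x +v y" := (@bs_add Y x y) (at level 50, left associativity).
Local Notation "-v x" := (@bs_opp Y x) (at level 35, right associativity).
Local Notation "a *v x" := (@bs_scal Y a x) (at level 40).
Local Notation "'nrm' x" := (@bs_norm Y x) (at level 10, x at level 9).
Local Notation "0v" := (@bs_zero Y).

Lemma add0l (x : Y) : 0v +v x = x.
Proof. rewrite bs_add_comm. apply bs_add_zero. Qed.
Lemma addNl (x : Y) : -v x +v x = 0v.
Proof. rewrite bs_add_comm. apply bs_add_opp. Qed.
Lemma addA (x y z : Y) : x +v (y +v z) = x +v y +v z.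
Proof. apply bs_add_assoc. Qed.
Lemma addC (x y : Y) : x +v y = y +v x.
Proof. apply bs_add_comm. Qed.
Lemma add_cancel (x y z : Y) : x +v y = x +v z -> y = z.
Proof.
  intro H. rewrite <- (add0l y), <- (add0l z), <- (addNl x), <- !addA, H. reflexivity.
Qed.
Lemma scal0l (x : Y) : 0 *v x = 0v.
Proof.
  apply (add_cancel (0 *v x)). rewrite bs_add_zero, <- bs_scal_distr_r.
  f_equal. ring.
Qed.
Lemma scal0r (a : R) : a *v 0v = 0v.
Proof.
  apply (add_cancel (a *v 0v)). rewrite bs_add_zero, <- bs_scal_distr_l, bs_add_zero. reflexivity.
Qed.
Lemma opp_scal (x : Y) : -v x = (-1) *v x.
Proof.
  apply (add_cancel x). rewrite bs_add_opp.
  rewrite <- (bs_scal_one _ x) at 1. rewrite <- bs_scal_distr_r. replace (1 + -1) with 0 by ring. rewrite scal0l. reflexivity.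
Qed.
Lemma scal_opp (a : R) (x : Y) : a *v (-v x) = -v (a *v x).
Proof. rewrite !opp_scal, !bs_scal_assoc. f_equal. ring. Qed.
Lemma opp_add (x y : Y) : -v (x +v y) = -v x +v -v y.
Proof. rewrite !opp_scal, bs_scal_distr_l. reflexivity. Qed.
Lemma opp_opp (x : Y) : -v -v x = x.
Proof. rewrite !opp_scal, bs_scal_assoc. replace (-1 * -1) with 1 by ring. apply bs_scal_one. Qed.
Lemma opp0 : -v 0v = 0v.
Proof. rewrite opp_scal. apply scal0r. Qed.
Lemma scal_oppl (a : R) (x : Y) : (- a) *v x = -v (a *v x).
Proof. rewrite opp_scal, bs_scal_assoc. f_equal. ring. Qed.
Lemma norm0 : nrm 0v = 0.
Proof. rewrite <- (scal0l 0v), bs_norm_scal, Rabs_R0. ring. Qed.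
Lemma norm_opp (x : Y) : nrm (-v x) = nrm x.
Proof. rewrite opp_scal, bs_norm_scal, Rabs_left by lra. ring. Qed.
Lemma norm_ge0 (x : Y) : 0 <= nrm x.
Proof.
  pose proof (bs_norm_triangle _ x (-v x)). rewrite bs_add_opp, norm0, norm_opp in H. lra.
Qed.
Lemma sub_eq0 (x y : Y) : x +v -v y = 0v -> x = y.
Proof.
  intro H. rewrite <- (bs_add_zero _ x), <- (addNl y), addA, H, add0l. reflexivity.
Qed.
Lemma norm_sub0 (x y : Y) : nrm (x +v -v y) = 0 -> x = y.
Proof. intro H. apply sub_eq0. apply bs_norm_eq0. exact H. Qed.
Lemma sub_split (x y z : Y) : x +v -v z = (x +v -v y) +v (y +v -v z).
Proof. rewrite <- addA, (addA (-v y)), addNl, add0l. reflexivity. Qed.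
Lemma norm_sub_sym (x y : Y) : nrm (x +v -v y) = nrm (y +v -v x).
Proof. rewrite <- norm_opp, opp_add, opp_opp, addC. reflexivity. Qed.
Lemma norm_sub_tri (x y z : Y) : nrm (x +v -v z) <= nrm (x +v -v y) + nrm (y +v -v z).
Proof. rewrite (sub_split x y z). apply bs_norm_triangle. Qed.
Lemma sub_add2 (a b c d : Y) : (a +v b) +v -v (c +v d) = (a +v -v c) +v (b +v -v d).
Proof.
  rewrite opp_add. rewrite <- !addA. f_equal. rewrite !addA. rewrite (addC b). rewrite <- addA. reflexivity.
Qed.
Lemma sub_scal (a : R) (x y : Y) : a *v x +v -v (a *v y) = a *v (x +v -v y).
Proof. rewrite bs_scal_distr_l, scal_opp. reflexivity. Qed.
Lemma sub_self (x : Y) : x +v -v x = 0v.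
Proof. apply bs_add_opp. Qed.
Lemma norm_triangle_sub (x y : Y) : nrm x <= nrm (x +v -v y) + nrm y.
Proof.
  pose proof (norm_sub_tri x y 0v). rewrite opp0, !bs_add_zero in H. exact H.
Qed.

Lemma add4 (a b c d : Y) : bs_add (bs_add a b) (bs_add c d) = bs_add (bs_add a c) (bs_add b d).
Proof.
  rewrite <- !addA. f_equal. rewrite !addA. f_equal. apply addC.
Qed.
Lemma add_sub_cancel (a b c : Y) : bs_add a (bs_add (bs_add b (bs_opp a)) (bs_opp c)) = bs_add b (bs_opp c).
Proof.
  rewrite !addA. f_equal. rewrite (addC a b), <- addA, bs_add_opp, bs_add_zero. reflexivity.
Qed.
Lemma sub_sub_cancel (a b : Y) : bs_add a (bs_opp (bs_add a (bs_opp b))) = b.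
Proof. rewrite opp_add, opp_opp, addA, bs_add_opp, add0l. reflexivity. Qed.

End Basics.

Lemma add_eq0 (Y : BanachSpace) (x y : Y) : bs_add x y = bs_zero -> x = bs_opp y.
Proof.
  intro H. rewrite <- (bs_add_zero _ x), <- (bs_add_opp _ y), addA, H, add0l. reflexivity.
Qed.


Section Lim.
Variable Y : BanachSpace.
Local Notation "x +v y" := (@bs_add Y x y) (at level 50, left associativity).
Local Notation "-v x" := (@bs_opp Y x) (at level 35, right associativity).
Local Notation "a *v x" := (@bs_scal Y a x) (at level 40).
Local Notation "'nrm' x" := (@bs_norm Y x) (at level 10, x at level 9).
Local Notation "0v" := (@bs_zero Y).

Definition conv (u : nat -> Y) (l : Y) := converges_to Y u l.

Lemma conv_unique u l1 l2 : conv u l1 -> conv u l2 -> l1 = l2.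
Proof.
  intros H1 H2. apply norm_sub0. apply Rle_antisym; [|apply norm_ge0].
  apply le_epsilon. intros eps Heps.
  destruct (H1 (eps/2)) as [N1 HN1]; [lra|]. destruct (H2 (eps/2)) as [N2 HN2]; [lra|].
  specialize (HN1 (max N1 N2) (Nat.le_max_l _ _)). specialize (HN2 (max N1 N2) (Nat.le_max_r _ _)).
  unfold Defs.dist in *. pose proof (norm_sub_tri Y l1 (u (max N1 N2)) l2).
  rewrite norm_sub_sym in HN1. lra.
Qed.

Lemma conv_ext u v l : (exists N, forall n, (N <= n)%nat -> u n = v n) -> conv u l -> conv v l.
Proof.
  intros [N HN] H eps Heps. destruct (H eps Heps) as [M HM]. exists (max N M).
  intros n Hn. pose proof (Nat.le_max_l N M). pose proof (Nat.le_max_r N M). rewrite <- HN by lia. apply HM. lia.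
Qed.

Lemma conv_const l : conv (fun _ => l) l.
Proof. intros eps Heps. exists O. intros n _. unfold Defs.dist. rewrite sub_self, norm0. lra. Qed.

Lemma conv_shift u l : conv u l -> conv (fun n => u (S n)) l.
Proof. intros H eps Heps. destruct (H eps Heps) as [N HN]. exists N. intros n Hn. apply HN. lia. Qed.

Lemma conv_add u v a b : conv u a -> conv v b -> conv (fun n => u n +v v n) (a +v b).
Proof.
  intros Hu Hv eps Heps. destruct (Hu (eps/2)) as [N1 H1]; [lra|]. destruct (Hv (eps/2)) as [N2 H2]; [lra|].
  exists (max N1 N2). intros n Hn. pose proof (Nat.le_max_l N1 N2). pose proof (Nat.le_max_r N1 N2). unfold Defs.dist in *. rewrite sub_add2.
  pose proof (bs_norm_triangle _ (u n +v -v a) (v n +v -v b)).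
  specialize (H1 n ltac:(lia)). specialize (H2 n ltac:(lia)). lra.
Qed.

Lemma conv_scal c u a : conv u a -> conv (fun n => c *v u n) (c *v a).
Proof.
  intros Hu eps Heps. destruct (Hu (eps/(Rabs c + 1))) as [N HN].
  { apply Rdiv_lt_0_compat; [lra|]. pose proof (Rabs_pos c). lra. }
  exists N. intros n Hn. unfold Defs.dist in *. rewrite sub_scal, bs_norm_scal.
  specialize (HN n Hn). pose proof (Rabs_pos c). pose proof (norm_ge0 Y (u n +v -v a)).
  apply Rle_lt_trans with (Rabs c * (eps / (Rabs c + 1))).
  - apply Rmult_le_compat_l; lra.
  - apply Rlt_le_trans with ((Rabs c + 1) * (eps / (Rabs c + 1))).
    + apply Rmult_lt_compat_r; [apply Rdiv_lt_0_compat|]; lra.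
    + right. field. lra.
Qed.

Lemma lin_opp (A : Y -> Y) x : is_linear Y A -> A (-v x) = -v (A x).
Proof. intros [_ Hs]. rewrite opp_scal, Hs, <- opp_scal. reflexivity. Qed.
Lemma lin_zero (A : Y -> Y) : is_linear Y A -> A 0v = 0v.
Proof. intros [_ Hs]. rewrite <- (scal0l Y 0v) at 1. rewrite Hs, scal0l. reflexivity. Qed.
Lemma lin_sub (A : Y -> Y) x y : is_linear Y A -> A (x +v -v y) = A x +v -v (A y).
Proof. intros H. rewrite (proj1 H), lin_opp by exact H. reflexivity. Qed.

Lemma bounded_pos (A : Y -> Y) : is_bounded Y A -> exists C, 0 < C /\ forall x, nrm (A x) <= C * nrm x.
Proof.
  intros [C HC]. exists (Rabs C + 1). split. { pose proof (Rabs_pos C). lra. }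
  intro x. eapply Rle_trans; [apply HC|]. apply Rmult_le_compat_r; [apply norm_ge0|].
  pose proof (Rle_abs C). lra.
Qed.

Lemma conv_op (A : Y -> Y) u a : bounded_operator Y A -> conv u a -> conv (fun n => A (u n)) (A a).
Proof.
  intros [Hl Hb] Hu eps Heps. destruct (bounded_pos A Hb) as [C [HC HA]].
  destruct (Hu (eps / C)) as [N HN]. { apply Rdiv_lt_0_compat; lra. }
  exists N. intros n Hn. unfold Defs.dist in *. rewrite <- lin_sub by exact Hl.
  eapply Rle_lt_trans; [apply HA|]. specialize (HN n Hn).
  apply Rlt_le_trans with (C * (eps / C)). { apply Rmult_lt_compat_l; lra. }
  right. field. lra.
Qed.

Fixpoint vs (a : nat -> Y) (n : nat) : Y :=
  match n with O => 0v | S k => vs a k +v a k end.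

Lemma vs_lin (A : Y -> Y) a n : is_linear Y A -> A (vs a n) = vs (fun k => A (a k)) n.
Proof.
  intro H. induction n; simpl. apply lin_zero; exact H. rewrite (proj1 H), IHn. reflexivity.
Qed.
Lemma vs_add a b n : vs (fun k => a k +v b k) n = vs a n +v vs b n.
Proof.
  induction n; simpl. rewrite bs_add_zero. reflexivity.
  rewrite IHn. rewrite <- !addA. f_equal. rewrite !addA. f_equal. apply addC.
Qed.
Lemma vs_scal c a n : vs (fun k => c *v a k) n = c *v vs a n.
Proof. induction n; simpl. rewrite scal0r. reflexivity. rewrite IHn, bs_scal_distr_l. reflexivity. Qed.
Lemma vs_ext a b n : (forall k, (k < n)%nat -> a k = b k) -> vs a n = vs b n.
Proof. induction n; intro H; simpl. reflexivity. rewrite IHn by (intros; apply H; lia). rewrite H by lia. reflexivity. Qed.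
Lemma vs_zero_tail a n m : (forall k, (n <= k)%nat -> a k = 0v) -> (n <= m)%nat -> vs a m = vs a n.
Proof.
  intros H Hm. induction Hm. reflexivity. simpl. rewrite IHHm, H by lia. apply bs_add_zero.
Qed.

Lemma vs_diff a n d : vs a (n + S d)%nat +v -v vs a n = (vs a (n + d)%nat +v -v vs a n) +v a (n + d)%nat.
Proof.
  replace (n + S d)%nat with (S (n + d)) by lia. simpl.
  rewrite <- !addA. f_equal. apply addC.
Qed.

Lemma geo_bound a K q n d : 0 <= q < 1 -> (forall k, nrm (a k) <= K * q^k) ->
  nrm (vs a (n + d)%nat +v -v vs a n) <= K * q^n * (1 - q^d) / (1 - q).
Proof.
  intros Hq Ha. induction d.
  - rewrite Nat.add_0_r, sub_self, norm0. simpl. right. field. lra.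
  - rewrite vs_diff. eapply Rle_trans; [apply bs_norm_triangle|].
    eapply Rle_trans. { apply Rplus_le_compat; [apply IHd | apply Ha]. }
    right. rewrite pow_add. simpl. field. lra.
Qed.

Lemma geo a K q : 0 <= q < 1 -> (forall k, nrm (a k) <= K * q^k) ->
  exists l, conv (vs a) l /\ forall n, nrm (l +v -v vs a n) <= K * q^n / (1 - q).
Proof.
  intros Hq Ha.
  assert (HK : 0 <= K). { pose proof (Ha O). pose proof (norm_ge0 Y (a O)). simpl in H. lra. }
  assert (Hqn : forall n, 0 <= q ^ n) by (intro; apply pow_le; lra).
  assert (Hqn1 : forall n, q ^ n <= 1).
  { intro n. induction n; simpl. lra. pose proof (Hqn n). nra. }
  assert (Hb : forall n d, nrm (vs a (n + d)%nat +v -v vs a n) <= K * q^n / (1 - q)).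
  { intros n d. eapply Rle_trans; [apply (geo_bound a K q n d Hq Ha)|].
    unfold Rdiv. apply Rmult_le_compat_r. { apply Rlt_le, Rinv_0_lt_compat. lra. }
    pose proof (Hqn n). pose proof (Hqn d). assert (0 <= K * q^n) by nra. nra. }
  assert (Hsmall : forall eps, 0 < eps -> exists N, forall n, (N <= n)%nat -> K * q^n / (1 - q) < eps).
  { intros eps Heps. destruct (pow_lt_1_zero q ltac:(rewrite Rabs_right; lra) (eps * (1 - q) / (K + 1))) as [N HN].
    { apply Rdiv_lt_0_compat; [apply Rmult_lt_0_compat|]; lra. }
    exists N. intros n Hn. specialize (HN n Hn). rewrite Rabs_right in HN by (apply Rle_ge; apply Hqn).
    assert (H1 : (K+1) * q^n < eps*(1-q)).
    { apply Rmult_lt_compat_l with (r:=K+1) in HN; [|lra].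
      replace ((K+1)*(eps*(1-q)/(K+1))) with (eps*(1-q)) in HN by (field; lra). exact HN. }
    apply Rmult_lt_reg_r with (1-q); [lra|].
    replace (K*q^n/(1-q)*(1-q)) with (K*q^n) by (field; lra). pose proof (Hqn n). nra. }
  destruct (bs_complete _ (vs a)) as [l Hl].
  { intros eps Heps. destruct (Hsmall eps Heps) as [N HN]. exists N. intros m n Hm Hn.
    destruct (Nat.le_ge_cases n m) as [Hnm|Hnm].
    - replace m with (n + (m - n))%nat by lia. eapply Rle_lt_trans; [apply Hb|]. apply HN; lia.
    - rewrite norm_sub_sym. replace n with (m + (n - m))%nat by lia. eapply Rle_lt_trans; [apply Hb|]. apply HN; lia. }
  exists l. split. exact Hl.
  intro n. apply le_epsilon. intros eps Heps. destruct (Hl eps Heps) as [N HN].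
  specialize (HN (n + N)%nat ltac:(lia)). unfold Defs.dist in HN.
  pose proof (norm_sub_tri Y l (vs a (n + N)) (vs a n)). rewrite norm_sub_sym in HN.
  specialize (Hb n N). lra.
Qed.

Definition slim (a : nat -> Y) : Y := epsilon (inhabits 0v) (fun l => conv (vs a) l).
Lemma slim_spec a l : conv (vs a) l -> slim a = l.
Proof.
  intro H. apply (conv_unique (vs a)); [|exact H]. unfold slim.
  apply (epsilon_spec (inhabits 0v) (fun l => conv (vs a) l)). exists l. exact H.
Qed.

End Lim.


Fixpoint Rsum (f : nat -> R) (n : nat) : R :=
  match n with O => 0 | S k => Rsum f k + f k end.

Lemma Rsum_le f g n : (forall i, (i < n)%nat -> f i <= g i) -> Rsum f n <= Rsum g n.
Proof. induction n; intro H; simpl. lra. assert (f n <= g n) by (apply H; lia).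
  assert (Rsum f n <= Rsum g n) by (apply IHn; intros; apply H; lia). lra. Qed.
Lemma Rsum_nonneg f n : (forall i, (i < n)%nat -> 0 <= f i) -> 0 <= Rsum f n.
Proof. induction n; intro H; simpl. lra. assert (0 <= f n) by (apply H; lia).
  assert (0 <= Rsum f n) by (apply IHn; intros; apply H; lia). lra. Qed.
Lemma Rsum_ge_term f n i : (forall j, (j < n)%nat -> 0 <= f j) -> (i < n)%nat -> f i <= Rsum f n.
Proof.
  induction n; intros H Hi. lia. simpl. destruct (Nat.eq_dec i n) as [->|Hne].
  - assert (0 <= Rsum f n) by (apply Rsum_nonneg; intros; apply H; lia). lra.
  - assert (f i <= Rsum f n) by (apply IHn; [intros; apply H; lia| lia]). assert (0 <= f n) by (apply H; lia). lra.
Qed.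
Lemma Rsum_zero f n : (forall j, (j < n)%nat -> 0 <= f j) -> Rsum f n <= 0 -> forall i, (i < n)%nat -> f i = 0.
Proof. intros H H0 i Hi. pose proof (Rsum_ge_term f n i H Hi). pose proof (H i Hi). lra. Qed.
Lemma Rsum_scal a f n : Rsum (fun i => a * f i) n = a * Rsum f n.
Proof. induction n; simpl. ring. rewrite IHn. ring. Qed.
Lemma Rsum_add f g n : Rsum (fun i => f i + g i) n = Rsum f n + Rsum g n.
Proof. induction n; simpl. ring. rewrite IHn. ring. Qed.

Lemma finite_max (P : nat -> nat -> Prop) n :
  (forall i, (i < n)%nat -> exists N, forall k, (N <= k)%nat -> P i k) ->
  exists N, forall i, (i < n)%nat -> forall k, (N <= k)%nat -> P i k.
Proof.
  induction n; intro H. exists O. intros; lia.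
  destruct IHn as [N1 H1]. { intros; apply H; lia. }
  destruct (H n ltac:(lia)) as [N2 H2]. exists (N1 + N2)%nat. intros i Hi k Hk.
  destruct (Nat.eq_dec i n) as [->|Hne]. apply H2; lia. apply H1; lia.
Qed.

Section Lin.
Variable Y : BanachSpace.
Local Notation "x +v y" := (@bs_add Y x y) (at level 50, left associativity).
Local Notation "-v x" := (@bs_opp Y x) (at level 35, right associativity).
Local Notation "a *v x" := (@bs_scal Y a x) (at level 40).
Local Notation "'nrm' x" := (@bs_norm Y x) (at level 10, x at level 9).
Local Notation "0v" := (@bs_zero Y).
Local Notation lc := (lincomb Y).

Definition span (v : nat -> Y) n y := exists c, y = lc c v n.
Definition indep (v : nat -> Y) n := forall c, lc c v n = 0v -> forall i, (i < n)%nat -> c i = 0.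
Definition upd (v : nat -> Y) s (h : Y) := fun i => if Nat.eqb i s then h else v i.

Lemma lc_ext c d v w n : (forall i, (i < n)%nat -> c i = d i /\ v i = w i) -> lc c v n = lc d w n.
Proof.
  induction n; intro H; simpl. reflexivity.
  rewrite IHn by (intros; apply H; lia). destruct (H n ltac:(lia)) as [-> ->]. reflexivity.
Qed.
Lemma lc_add c d v n : lc (fun i => c i + d i) v n = lc c v n +v lc d v n.
Proof.
  induction n; simpl. rewrite bs_add_zero. reflexivity.
  rewrite IHn, bs_scal_distr_r. rewrite <- !addA. f_equal. rewrite !addA. f_equal. apply addC.
Qed.
Lemma lc_scal a c v n : lc (fun i => a * c i) v n = a *v lc c v n.
Proof. induction n; simpl. rewrite scal0r. reflexivity. rewrite IHn, bs_scal_distr_l, bs_scal_assoc. reflexivity. Qed.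
Lemma lc_sub c d v n : lc (fun i => c i - d i) v n = lc c v n +v -v lc d v n.
Proof.
  unfold Rminus. rewrite lc_add. f_equal. rewrite opp_scal, <- lc_scal. apply lc_ext. intros; split; [ring|reflexivity].
Qed.
Lemma lc_lin (A : Y -> Y) c v n : is_linear Y A -> A (lc c v n) = lc c (fun i => A (v i)) n.
Proof.
  intro H. induction n; simpl. apply lin_zero; exact H. rewrite (proj1 H), (proj2 H), IHn. reflexivity.
Qed.
Lemma lc_zero v n : lc (fun _ => 0) v n = 0v.
Proof. induction n; simpl. reflexivity. rewrite IHn, scal0l, bs_add_zero. reflexivity. Qed.
Lemma lc_delta v n i : (i < n)%nat -> lc (fun j => if Nat.eqb j i then 1 else 0) v n = v i.
Proof.
  induction n; intro Hi. lia. simpl. destruct (Nat.eq_dec i n) as [->|Hne].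
  - rewrite Nat.eqb_refl, bs_scal_one. rewrite (lc_ext _ (fun _ => 0) v v).
    + rewrite lc_zero, add0l. reflexivity.
    + intros j Hj. split; [|reflexivity]. destruct (Nat.eqb_spec j n); [lia|reflexivity].
  - rewrite IHn by lia. destruct (Nat.eqb_spec n i); [lia|]. rewrite scal0l, bs_add_zero. reflexivity.
Qed.
Lemma norm_lc c v n : nrm (lc c v n) <= Rsum (fun i => Rabs (c i) * nrm (v i)) n.
Proof.
  induction n; simpl. rewrite norm0. lra.
  eapply Rle_trans; [apply bs_norm_triangle|]. rewrite bs_norm_scal. lra.
Qed.

Lemma indep_unique v n c d : indep v n -> lc c v n = lc d v n -> forall i, (i < n)%nat -> c i = d i.
Proof.
  intros H E i Hi. assert (c i - d i = 0). { apply (H (fun j => c j - d j)); [|exact Hi].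
  rewrite lc_sub, E. apply sub_self. } lra.
Qed.

Lemma span_add v n x y : span v n x -> span v n y -> span v n (x +v y).
Proof. intros [c ->] [d ->]. exists (fun i => c i + d i). rewrite lc_add. reflexivity. Qed.
Lemma span_scal v n a x : span v n x -> span v n (a *v x).
Proof. intros [c ->]. exists (fun i => a * c i). rewrite lc_scal. reflexivity. Qed.
Lemma span_zero v n : span v n 0v.
Proof. exists (fun _ => 0). rewrite lc_zero. reflexivity. Qed.
Lemma span_lc v n w k c : (forall i, (i < k)%nat -> span v n (w i)) -> span v n (lc c w k).
Proof.
  induction k; intro H; simpl. apply span_zero.
  apply span_add. apply IHk; intros; apply H; lia. apply span_scal, H; lia.
Qed.
Lemma span_base v n i : (i < n)%nat -> span v n (v i).
Proof. intro Hi. exists (fun j => if Nat.eqb j i then 1 else 0). rewrite lc_delta by exact Hi. reflexivity. Qed.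

Lemma indep_prefix v n : indep v (S n) -> indep v n.
Proof.
  intros H c Hc i Hi. pose (c' := fun j => if Nat.eqb j n then 0 else c j).
  assert (lc c' v (S n) = 0v).
  { simpl. unfold c' at 2. rewrite Nat.eqb_refl, scal0l, bs_add_zero.
    rewrite <- Hc. apply lc_ext. intros j Hj. unfold c'. destruct (Nat.eqb_spec j n); [lia|]. split; reflexivity. }
  specialize (H c' H0 i ltac:(lia)). unfold c' in H. destruct (Nat.eqb_spec i n); [lia|]. exact H.
Qed.

Lemma indep_snoc v s h : indep v s -> ~ span v s h -> indep (upd v s h) (S s).
Proof.
  intros Hv Hh c Hc. simpl in Hc. unfold upd at 2 in Hc. rewrite Nat.eqb_refl in Hc.
  assert (E : lc c (upd v s h) s = lc c v s).
  { apply lc_ext. intros i Hi. unfold upd. destruct (Nat.eqb_spec i s); [lia|]. split; reflexivity. }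
  rewrite E in Hc.
  assert (Hcs : c s = 0).
  { destruct (Req_dec (c s) 0) as [|Hne]; [assumption|]. exfalso. apply Hh.
    exists (fun i => (- / c s) * c i). rewrite lc_scal.
    rewrite (add_eq0 Y _ _ Hc), opp_scal, !bs_scal_assoc.
    replace (- / c s * -1 * c s) with 1 by (field; exact Hne). rewrite bs_scal_one. reflexivity. }
  intros i Hi. destruct (Nat.eq_dec i s) as [->|Hne]. exact Hcs.
  apply (Hv c); [|lia]. rewrite Hcs, scal0l, bs_add_zero in Hc. exact Hc.
Qed.

Lemma NE v n : indep v n -> exists m, 0 < m /\ forall c, m * Rsum (fun i => Rabs (c i)) n <= nrm (lc c v n).
Proof.
  induction n as [|n IH]; intro Hind.
  { exists 1. split. lra. intro c. simpl. pose proof (norm_ge0 Y (lc c v 0)). simpl in H. lra. }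
  destruct (IH (indep_prefix v n Hind)) as [m0 [Hm0 Hm0b]].
  assert (HD : exists d, 0 < d /\ forall c, d <= nrm (v n +v -v lc c v n)).
  { apply NNPP. intro Hneg.
    assert (Hall : forall k : nat, exists c, nrm (v n +v -v lc c v n) < / INR (S k)).
    { intro k. apply NNPP. intro Hk. apply Hneg. exists (/ INR (S k)). split.
      { apply Rinv_0_lt_compat, lt_0_INR. lia. }
      intro c. apply Rnot_lt_le. intro Hlt. apply Hk. exists c. exact Hlt. }
    pose (cs := fun k => epsilon (inhabits (fun _ : nat => 0)) (fun c => nrm (v n +v -v lc c v n) < / INR (S k))).
    assert (Hcs : forall k, nrm (v n +v -v lc (cs k) v n) < / INR (S k)).
    { intro k. unfold cs. apply (epsilon_spec (inhabits (fun _ : nat => 0)) (fun c => nrm (v n +v -v lc c v n) < / INR (S k))). apply Hall. }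
    assert (Hinv : forall eps, 0 < eps -> exists N, forall k, (N <= k)%nat -> / INR (S k) < eps).
    { intros eps Heps. destruct (archimed_cor1 eps Heps) as [N [HN HN0]].
      exists N. intros k Hk. apply Rle_lt_trans with (/ INR N); [|exact HN].
      apply Rinv_le_contravar. apply lt_0_INR; exact HN0. apply le_INR. lia. }
    assert (Hcauchy : forall i, (i < n)%nat -> Cauchy_crit (fun k => cs k i)).
    { intros i Hi eps Heps. destruct (Hinv (eps * m0 / 2)) as [N HN].
      { apply Rmult_lt_0_compat; [apply Rmult_lt_0_compat|]; lra. }
      exists N. intros k l Hk Hl. unfold Rdist.
      assert (H1 : Rabs (cs k i - cs l i) <= Rsum (fun j => Rabs (cs k j - cs l j)) n).
      { apply (Rsum_ge_term (fun j => Rabs (cs k j - cs l j))). intros; apply Rabs_pos. exact Hi. }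
      pose proof (Hm0b (fun j => cs k j - cs l j)) as H2. rewrite lc_sub in H2.
      pose proof (norm_sub_tri Y (lc (cs k) v n) (v n) (lc (cs l) v n)) as H3.
      pose proof (norm_sub_sym Y (lc (cs k) v n) (v n)) as H4. pose proof (Hcs k). pose proof (Hcs l).
      pose proof (HN k Hk). pose proof (HN l Hl).
      assert (m0 * Rabs (cs k i - cs l i) < m0 * eps).
      { apply Rle_lt_trans with (m0 * Rsum (fun j => Rabs (cs k j - cs l j)) n).
        apply Rmult_le_compat_l; lra. lra. }
      apply Rmult_lt_reg_l with m0; lra. }
    pose (a := fun i => epsilon (inhabits 0) (fun l => Un_cv (fun k => cs k i) l)).
    assert (Ha : forall i, (i < n)%nat -> Un_cv (fun k => cs k i) (a i)).
    { intros i Hi. unfold a. apply (epsilon_spec (inhabits 0) (fun l => Un_cv (fun k => cs k i) l)).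
      destruct (R_complete _ (Hcauchy i Hi)) as [l Hl]. exists l. exact Hl. }
    assert (Heq : v n = lc a v n).
    { apply norm_sub0. apply Rle_antisym; [|apply norm_ge0]. apply le_epsilon. intros eps Heps.
      set (M := Rsum (fun i => nrm (v i)) n + 1).
      assert (HM : 0 < M). { unfold M. assert (0 <= Rsum (fun i => nrm (v i)) n) by (apply Rsum_nonneg; intros; apply norm_ge0). lra. }
      destruct (finite_max (fun i k => Rabs (cs k i - a i) < eps / (2 * M)) n) as [K0 HK0].
      { intros i Hi. destruct (Ha i Hi (eps / (2 * M))) as [N HN].
        { apply Rdiv_lt_0_compat; lra. }
        exists N. intros k Hk. apply HN. exact Hk. }
      destruct (Hinv (eps / 2)) as [K1 HK1]. lra.
      set (K := (K0 + K1)%nat).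
      pose proof (norm_sub_tri Y (v n) (lc (cs K) v n) (lc a v n)) as T1.
      pose proof (Hcs K) as T2. pose proof (HK1 K ltac:(unfold K; lia)) as T3.
      rewrite <- lc_sub in T1.
      pose proof (norm_lc (fun i => cs K i - a i) v n) as T4.
      assert (T5 : Rsum (fun i => Rabs (cs K i - a i) * nrm (v i)) n <= Rsum (fun i => eps / (2 * M) * nrm (v i)) n).
      { apply Rsum_le. intros i Hi. apply Rmult_le_compat_r. apply norm_ge0.
        left. apply HK0; [exact Hi | unfold K; lia]. }
      rewrite Rsum_scal in T5.
      assert (T6 : eps / (2 * M) * Rsum (fun i => nrm (v i)) n <= eps / 2).
      { apply Rle_trans with (eps / (2 * M) * M).
        - apply Rmult_le_compat_l. left; apply Rdiv_lt_0_compat; lra. unfold M; lra.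
        - right. field. lra. }
      lra. }
    pose (c' := fun i => if Nat.eqb i n then -1 else a i).
    assert (Hc' : lc c' v (S n) = 0v).
    { simpl. unfold c' at 2. rewrite Nat.eqb_refl, <- opp_scal.
      rewrite (lc_ext c' a v v). rewrite <- Heq. apply bs_add_opp.
      intros i Hi. unfold c'. destruct (Nat.eqb_spec i n); [lia|]. split; reflexivity. }
    specialize (Hind c' Hc' n ltac:(lia)). unfold c' in Hind. rewrite Nat.eqb_refl in Hind. lra. }
  destruct HD as [d [Hd HDb]].
  set (nv := nrm (v n)).
  assert (Hnv : 0 <= nv) by apply norm_ge0.
  exists (/ ((1 + nv / d) / m0 + 1 / d)).
  assert (Hpos : 0 < (1 + nv / d) / m0 + 1 / d).
  { assert (0 <= nv / d) by (apply Rmult_le_pos; [lra| left; apply Rinv_0_lt_compat; lra]).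
    assert (0 < (1 + nv/d) / m0) by (apply Rdiv_lt_0_compat; lra).
    assert (0 < 1 / d) by (apply Rdiv_lt_0_compat; lra). lra. }
  split. apply Rinv_0_lt_compat; exact Hpos.
  intro c. set (t := lc c v (S n)). simpl Rsum.
  assert (Ha : Rabs (c n) * d <= nrm t).
  { destruct (Req_dec (c n) 0) as [E|Hne].
    - rewrite E, Rabs_R0. pose proof (norm_ge0 Y t). lra.
    - assert (Et : t = c n *v (v n +v -v lc (fun i => (- / c n) * c i) v n)).
      { unfold t. simpl. rewrite lc_scal, bs_scal_distr_l, scal_opp, bs_scal_assoc.
        replace (c n * - / c n) with (-1) by (field; exact Hne).
        rewrite <- opp_scal, opp_opp, addC. reflexivity. }
      rewrite Et, bs_norm_scal. apply Rmult_le_compat_l. apply Rabs_pos. apply HDb. }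
  assert (Hb : m0 * Rsum (fun i => Rabs (c i)) n <= nrm t + Rabs (c n) * nv).
  { eapply Rle_trans; [apply Hm0b|].
    pose proof (norm_triangle_sub Y (lc c v n) (-v (c n *v v n))) as H.
    rewrite opp_opp, norm_opp, bs_norm_scal in H. exact H. }
  assert (Hcn : Rabs (c n) <= nrm t / d).
  { apply (Rmult_le_reg_r d); [lra|]. unfold Rdiv. rewrite Rmult_assoc, Rinv_l, Rmult_1_r by lra. exact Ha. }
  assert (Hsum : Rsum (fun i => Rabs (c i)) n <= nrm t * (1 + nv / d) / m0).
  { apply (Rmult_le_reg_l m0); [lra|].
    replace (m0 * (nrm t * (1 + nv / d) / m0)) with (nrm t + nrm t / d * nv) by (field; split; lra).
    assert (Rabs (c n) * nv <= nrm t / d * nv) by (apply Rmult_le_compat_r; lra). lra. }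
  apply (Rmult_le_reg_l ((1 + nv / d) / m0 + 1 / d)); [exact Hpos|].
  rewrite <- Rmult_assoc, Rinv_r, Rmult_1_l by lra.
  replace (((1 + nv / d) / m0 + 1 / d) * nrm t) with (nrm t * (1 + nv / d) / m0 + nrm t / d) by (field; split; lra).
  lra.
Qed.
End Lin.


Section Func.
Variable Y : BanachSpace.
Local Notation "x +v y" := (@bs_add Y x y) (at level 50, left associativity).
Local Notation "-v x" := (@bs_opp Y x) (at level 35, right associativity).
Local Notation "a *v x" := (@bs_scal Y a x) (at level 40).
Local Notation "'nrm' x" := (@bs_norm Y x) (at level 10, x at level 9).
Local Notation "0v" := (@bs_zero Y).
Local Notation lc := (lincomb Y).

Lemma span_upd B s h y : span Y B s y -> span Y (upd Y B s h) (S s) y.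
Proof.
  intros [c ->]. exists (fun i => if Nat.eqb i s then 0 else c i). simpl.
  rewrite Nat.eqb_refl, scal0l, bs_add_zero. apply lc_ext. intros i Hi.
  unfold upd. destruct (Nat.eqb_spec i s); [lia|]. split; reflexivity.
Qed.

Lemma ext u n V r : indep Y u n -> exists B s, (n <= s)%nat /\ (forall i, (i < n)%nat -> B i = u i) /\
  indep Y B s /\ (forall j, (j < r)%nat -> span Y B s (V j)) /\
  (forall i, (i < s)%nat -> (n <= i)%nat -> exists j, (j < r)%nat /\ B i = V j).
Proof.
  intro Hu. induction r as [|r IH].
  { exists u, n. split; [lia|]. split; [auto|]. split; [exact Hu|]. split; intros; lia. }
  destruct IH as [B [s [H1 [H2 [H3 [H4 H5]]]]]].
  destruct (classic (span Y B s (V r))) as [Hs|Hs].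
  - exists B, s. repeat split; auto. intros j Hj. destruct (Nat.eq_dec j r) as [->|]; [exact Hs|apply H4; lia].
    intros i Hi Hni. destruct (H5 i Hi Hni) as [j [Hj E]]. exists j. split; [lia|exact E].
  - exists (upd Y B s (V r)), (S s). repeat split.
    + lia.
    + intros i Hi. unfold upd. destruct (Nat.eqb_spec i s); [lia|]. apply H2, Hi.
    + apply indep_snoc; assumption.
    + intros j Hj. destruct (Nat.eq_dec j r) as [->|].
      * assert (E : upd Y B s (V r) s = V r) by (unfold upd; rewrite Nat.eqb_refl; reflexivity).
        rewrite <- E at 2. apply span_base. lia.
      * apply span_upd, H4. lia.
    + intros i Hi Hni. unfold upd. destruct (Nat.eqb_spec i s).
      * exists r. split; [lia|reflexivity].
      * destruct (H5 i ltac:(lia) Hni) as [j [Hj E]]. exists j. split; [lia|exact E].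
Qed.

Definition flin (f : Y -> R) := (forall x y, f (x +v y) = f x + f y) /\ (forall a x, f (a *v x) = a * f x).
Definition fbnd (f : Y -> R) := exists C, 0 < C /\ forall x, Rabs (f x) <= C * nrm x.

Lemma flin_zero f : flin f -> f 0v = 0.
Proof. intros [_ H]. rewrite <- (scal0l Y 0v) at 1. rewrite H. ring. Qed.
Lemma flin_lc f c v n : flin f -> (forall i, (i < n)%nat -> f (v i) = 0) -> f (lc c v n) = 0.
Proof.
  intros Hf H. induction n; simpl. apply flin_zero; exact Hf.
  rewrite (proj1 Hf), (proj2 Hf), IHn by (intros; apply H; lia). rewrite H by lia. ring.
Qed.

Lemma lc_vsub c v w n : lc c (fun i => v i +v -v w i) n = lc c v n +v -v lc c w n.
Proof.
  induction n; simpl. rewrite opp0, bs_add_zero. reflexivity.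
  rewrite IHn, bs_scal_distr_l, scal_opp. rewrite sub_add2. reflexivity.
Qed.

Variable P : nat -> Y -> Y.
Hypothesis HPb : forall N, bounded_operator Y (P N).
Hypothesis HPr : forall N, exists r V, forall y, span Y V r (P N y).
Hypothesis HPc : forall y, conv Y (fun N => P N y) y.

Lemma sep w k : indep Y w k -> exists N, indep Y (fun i => P N (w i)) k.
Proof.
  intro Hw. destruct (NE Y w k Hw) as [m [Hm Hmb]].
  destruct (finite_max (fun i N => nrm (P N (w i) +v -v w i) < m / 2) k) as [N HN].
  { intros i Hi. destruct (HPc (w i) (m / 2)) as [N HN]. lra. exists N. exact HN. }
  exists N. intros c Hc.
  assert (E : lc c w k = lc c (fun i => w i +v -v P N (w i)) k).
  { rewrite lc_vsub, Hc, opp0, bs_add_zero. reflexivity. }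
  assert (Hle : m * Rsum (fun i => Rabs (c i)) k <= m / 2 * Rsum (fun i => Rabs (c i)) k).
  { eapply Rle_trans; [apply Hmb|]. rewrite E. eapply Rle_trans; [apply norm_lc|].
    rewrite <- Rsum_scal. apply Rsum_le. intros i Hi. rewrite (Rmult_comm (m/2)).
    apply Rmult_le_compat_l. apply Rabs_pos. rewrite norm_sub_sym. left. apply HN; [exact Hi|lia]. }
  assert (Hs : Rsum (fun i => Rabs (c i)) k <= 0).
  { assert (0 <= Rsum (fun i => Rabs (c i)) k) by (apply Rsum_nonneg; intros; apply Rabs_pos). nra. }
  intros i Hi. pose proof (Rsum_zero (fun i => Rabs (c i)) k ltac:(intros; apply Rabs_pos) Hs i Hi) as Z.
  simpl in Z. destruct (Req_dec (c i) 0); auto. exfalso. pose proof (Rabs_pos_lt _ H). lra.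
Qed.

Lemma func w k : indep Y w (S k) -> exists f, flin f /\ fbnd f /\ (forall i, (i < k)%nat -> f (w i) = 0) /\ f (w k) = 1.
Proof.
  intro Hw. destruct (sep w (S k) Hw) as [N HN].
  destruct (HPr N) as [r [V HV]].
  destruct (ext (fun i => P N (w i)) (S k) V r HN) as [B [s [Hs [HBu [HBi [HBV _]]]]]].
  destruct (NE Y B s HBi) as [mB [HmB HmBb]].
  destruct (bounded_pos Y (P N) (proj2 (HPb N))) as [CP [HCP HCPb]].
  assert (Hsp : forall y, span Y B s (P N y)).
  { intro y. destruct (HV y) as [c Ec]. rewrite Ec. apply span_lc. exact HBV. }
  pose (crd := fun y => epsilon (inhabits (fun _ : nat => 0)) (fun c => P N y = lc c B s)).
  assert (Hcrd : forall y, P N y = lc (crd y) B s).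
  { intro y. unfold crd. apply (epsilon_spec (inhabits (fun _ : nat => 0)) (fun c => P N y = lc c B s)). apply Hsp. }
  destruct (HPb N) as [[HPa HPs] _].
  exists (fun y => crd y k). split; [split|split; [|split]].
  - intros x y. apply (indep_unique Y B s (crd (x +v y)) (fun i => crd x i + crd y i)); [exact HBi| |lia].
    rewrite lc_add, <- !Hcrd. apply HPa.
  - intros a x. apply (indep_unique Y B s (crd (a *v x)) (fun i => a * crd x i)); [exact HBi| |lia].
    rewrite lc_scal, <- !Hcrd. apply HPs.
  - exists (CP / mB). split. apply Rdiv_lt_0_compat; assumption.
    intro x. apply (Rmult_le_reg_l mB); [exact HmB|].
    replace (mB * (CP / mB * nrm x)) with (CP * nrm x) by (field; lra).
    eapply Rle_trans; [|apply HCPb]. rewrite Hcrd.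
    eapply Rle_trans; [|apply HmBb]. apply Rmult_le_compat_l; [lra|].
    apply (Rsum_ge_term (fun i => Rabs (crd x i))). intros; apply Rabs_pos. lia.
  - intros i Hi. assert (E : P N (w i) = lc (fun j => if Nat.eqb j i then 1 else 0) B s).
    { rewrite lc_delta by lia. symmetry. apply HBu. lia. }
    rewrite Hcrd in E. rewrite (indep_unique Y B s _ _ HBi E k) by lia.
    destruct (Nat.eqb_spec k i); [lia|reflexivity].
  - assert (E : P N (w k) = lc (fun j => if Nat.eqb j k then 1 else 0) B s).
    { rewrite lc_delta by lia. symmetry. apply HBu. lia. }
    rewrite Hcrd in E. rewrite (indep_unique Y B s _ _ HBi E k) by lia.
    rewrite Nat.eqb_refl. reflexivity.
Qed.

Lemma func' w k h : ~ span Y w k h -> exists f, flin f /\ fbnd f /\ (forall i, (i < k)%nat -> f (w i) = 0) /\ f h = 1.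
Proof.
  intro Hh.
  assert (Hi0 : indep Y w 0) by (intros c _ i Hi; lia).
  destruct (ext w 0 w k Hi0) as [B [s [_ [_ [HBi [HBw HBsub]]]]]].
  assert (HBin : ~ span Y B s h).
  { intros [c Ec]. apply Hh. rewrite Ec. apply span_lc. intros i Hi.
    destruct (HBsub i Hi ltac:(lia)) as [j [Hj ->]]. apply span_base. exact Hj. }
  destruct (func (upd Y B s h) s (indep_snoc Y B s h HBi HBin)) as [f [Hf [Hfb [H0 H1]]]].
  exists f. split; [exact Hf|]. split; [exact Hfb|]. split.
  - intros i Hi. destruct (HBw i Hi) as [c ->]. apply flin_lc; [exact Hf|].
    intros j Hj. rewrite <- (H0 j Hj). unfold upd. destruct (Nat.eqb_spec j s); [lia|reflexivity].
  - unfold upd in H1. rewrite Nat.eqb_refl in H1. exact H1.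
Qed.
End Func.


Section Ser.
Variable Y : BanachSpace.
Local Notation "x +v y" := (@bs_add Y x y) (at level 50, left associativity).
Local Notation "-v x" := (@bs_opp Y x) (at level 35, right associativity).
Local Notation "a *v x" := (@bs_scal Y a x) (at level 40).
Local Notation "'nrm' x" := (@bs_norm Y x) (at level 10, x at level 9).
Local Notation "0v" := (@bs_zero Y).

Lemma conv_fun_eq u v l : (forall n, u n = v n) -> conv Y u l -> conv Y v l.
Proof. intros H. apply conv_ext. exists O. intros; apply H. Qed.

Lemma series_op (a : nat -> Y -> Y) K q : (forall k, is_linear Y (a k)) -> 0 <= q < 1 -> 0 <= K ->
  (forall k x, nrm (a k x) <= K * nrm x * q ^ k) ->
  exists R, bounded_operator Y R /\ (forall x, conv Y (vs Y (fun k => a k x)) (R x)) /\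
    (forall x n, nrm (R x +v -v vs Y (fun k => a k x) n) <= K * nrm x * q ^ n / (1 - q)).
Proof.
  intros Hlin Hq HK Hb.
  assert (Hg : forall x, exists l, conv Y (vs Y (fun k => a k x)) l /\
     forall n, nrm (l +v -v vs Y (fun k => a k x) n) <= K * nrm x * q ^ n / (1 - q)).
  { intro x. apply geo; [exact Hq|]. intro k. apply Hb. }
  exists (fun x => slim Y (fun k => a k x)).
  assert (Hs : forall x, conv Y (vs Y (fun k => a k x)) (slim Y (fun k => a k x))).
  { intro x. destruct (Hg x) as [l [Hl _]]. rewrite (slim_spec Y _ l Hl). exact Hl. }
  split; [split; [split|]|split].
  - intros x y. apply slim_spec.
    eapply conv_fun_eq; [|apply (conv_add Y _ _ _ _ (Hs x) (Hs y))].
    intro n. simpl. rewrite <- vs_add. apply vs_ext. intros k _. symmetry. apply (proj1 (Hlin k)).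
  - intros c x. apply slim_spec.
    eapply conv_fun_eq; [|apply (conv_scal Y c _ _ (Hs x))].
    intro n. simpl. rewrite <- vs_scal. apply vs_ext. intros k _. symmetry. apply (proj2 (Hlin k)).
  - exists (K / (1 - q)). intro x. destruct (Hg x) as [l [Hl Hb2]].
    rewrite (slim_spec Y _ l Hl). specialize (Hb2 O). simpl in Hb2. rewrite opp0, bs_add_zero in Hb2.
    eapply Rle_trans; [exact Hb2|]. right. field. lra.
  - exact Hs.
  - intros x n. destruct (Hg x) as [l [Hl Hb2]]. rewrite (slim_spec Y _ l Hl). apply Hb2.
Qed.

Fixpoint ap (A : Y -> Y) (n : nat) (x : Y) : Y :=
  match n with O => x | S k => A (ap A k x) end.

Lemma ap_comm A n x : ap A n (A x) = A (ap A n x).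
Proof. induction n; simpl. reflexivity. rewrite IHn. reflexivity. Qed.

Lemma neumann (A : Y -> Y) e : bounded_operator Y A -> 0 <= e < 1 -> (forall x, nrm (A x) <= e * nrm x) ->
  exists T, bounded_operator Y T /\ (forall x, T (x +v -v A x) = x) /\ (forall x, T x +v -v A (T x) = x) /\
    (forall x, nrm (T x +v -v x) <= e / (1 - e) * nrm x).
Proof.
  intros [HAl HAb] He HA.
  assert (Hlin : forall k, is_linear Y (ap A k)).
  { intro k. induction k; simpl; split.
    - reflexivity. - reflexivity.
    - intros x y. rewrite (proj1 IHk). apply (proj1 HAl).
    - intros c x. rewrite (proj2 IHk). apply (proj2 HAl). }
  assert (Hb : forall k x, nrm (ap A k x) <= 1 * nrm x * e ^ k).
  { intros k x. induction k; simpl. lra. eapply Rle_trans; [apply HA|].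
    assert (0 <= e) by lra. nra. }
  destruct (series_op (ap A) 1 e Hlin He ltac:(lra) Hb) as [T [HT [Hconv Htail]]].
  exists T. split; [exact HT|]. split; [|split].
  - intro x.
    assert (E : forall n, vs Y (fun k => ap A k (x +v -v A x)) n = x +v -v ap A n x).
    { induction n; simpl. symmetry. apply sub_self.
      rewrite IHn. rewrite (lin_sub Y (ap A n)) by apply Hlin. rewrite ap_comm, <- sub_split. reflexivity. }
    apply (conv_unique Y (vs Y (fun k => ap A k (x +v -v A x)))); [apply Hconv|].
    eapply conv_fun_eq; [intro n; symmetry; apply E|].
    assert (H0 : conv Y (fun n => ap A n x) 0v).
    { intros eps Heps. destruct (pow_lt_1_zero e ltac:(rewrite Rabs_right; lra) (eps / (nrm x + 1))) as [N HN].
      { apply Rdiv_lt_0_compat. lra. pose proof (norm_ge0 Y x). lra. }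
      exists N. intros n Hn. unfold Defs.dist. rewrite opp0, bs_add_zero.
      eapply Rle_lt_trans; [apply Hb|]. specialize (HN n Hn).
      rewrite Rabs_right in HN by (apply Rle_ge, pow_le; lra).
      pose proof (norm_ge0 Y x).
      apply Rle_lt_trans with ((nrm x + 1) * e ^ n). { assert (0 <= e^n) by (apply pow_le; lra). nra. }
      apply Rmult_lt_compat_l with (r := nrm x + 1) in HN; [|lra].
      replace ((nrm x + 1) * (eps / (nrm x + 1))) with eps in HN by (field; lra). exact HN. }
    pose proof (conv_add Y _ _ _ _ (conv_const Y x) (conv_scal Y (-1) _ _ H0)) as H1.
    rewrite scal0r, bs_add_zero in H1. eapply conv_fun_eq; [|exact H1].
    intro n. simpl. rewrite <- opp_scal. reflexivity.
  - intro x.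
    assert (E : forall n, A (vs Y (fun k => ap A k x) n) = vs Y (fun k => ap A k x) (S n) +v -v x).
    { intro n. rewrite (vs_lin Y A) by exact HAl. induction n; simpl.
      rewrite add0l, sub_self. reflexivity.
      rewrite IHn. simpl. rewrite <- !addA. f_equal. f_equal. apply addC. }
    assert (H1 : conv Y (fun n => A (vs Y (fun k => ap A k x) n)) (A (T x))).
    { apply conv_op. split; assumption. apply Hconv. }
    assert (H2 : conv Y (fun n => A (vs Y (fun k => ap A k x) n)) (T x +v -v x)).
    { eapply conv_fun_eq; [intro n; symmetry; apply E|].
      apply (conv_add Y _ _ _ _ (conv_shift Y _ _ (Hconv x)) (conv_const Y (-v x))). }
    rewrite (conv_unique Y _ _ _ H1 H2). rewrite opp_add, opp_opp, addA, sub_self, add0l. reflexivity.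
  - intro x. specialize (Htail x 1%nat). simpl in Htail. rewrite add0l in Htail.
    eapply Rle_trans; [exact Htail|]. right. field. lra.
Qed.
End Ser.


Lemma IZR_split k : IZR k = INR (Z.to_nat k) - INR (Z.to_nat (- k)).
Proof.
  destruct k; simpl.
  - lra.
  - rewrite INR_IZR_INZ, positive_nat_Z. lra.
  - rewrite INR_IZR_INZ, positive_nat_Z. rewrite <- Pos2Z.opp_pos. rewrite opp_IZR. lra.
Qed.

Definition coefp (M p : nat) : R :=
  let (a, b) := Cantor.of_nat p in (INR a - INR b) / INR (S M).

Lemma approx x M : exists p, Rabs (x - coefp M p) <= / INR (S M).
Proof.
  set (k := up (x * INR (S M))). destruct (archimed (x * INR (S M))) as [H1 H2]. fold k in H1, H2.
  exists (Cantor.to_nat (Z.to_nat k, Z.to_nat (- k))). unfold coefp. rewrite Cantor.cancel_of_to.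
  rewrite <- IZR_split. assert (HM : 0 < INR (S M)) by (apply lt_0_INR; lia).
  replace (x - IZR k / INR (S M)) with (- (IZR k - x * INR (S M)) / INR (S M)) by (field; lra).
  unfold Rdiv. rewrite Rabs_mult, Rabs_Ropp, Rabs_right by lra.
  rewrite Rabs_right by (apply Rle_ge, Rlt_le, Rinv_0_lt_compat; lra).
  assert (0 < / INR (S M)) by (apply Rinv_0_lt_compat; lra). nra.
Qed.

Fixpoint skip (i c : nat) : nat := match i with O => c | S k => skip k (snd (Cantor.of_nat c)) end.
Definition nth_code (code i : nat) : nat := fst (Cantor.of_nat (skip i code)).

Lemma encode (t : nat -> nat) r : exists code, forall i, (i < r)%nat -> nth_code code i = t i.
Proof.
  revert t. induction r; intro t. exists O. intros; lia.
  destruct (IHr (fun i => t (S i))) as [c Hc]. exists (Cantor.to_nat (t O, c)).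
  intros i Hi. destruct i.
  - unfold nth_code. cbn [skip]. rewrite Cantor.cancel_of_to. reflexivity.
  - unfold nth_code. cbn [skip]. rewrite Cantor.cancel_of_to. cbn [snd]. apply Hc. lia.
Qed.

Section Dense.
Variable Y : BanachSpace.
Local Notation "x +v y" := (@bs_add Y x y) (at level 50, left associativity).
Local Notation "-v x" := (@bs_opp Y x) (at level 35, right associativity).
Local Notation "a *v x" := (@bs_scal Y a x) (at level 40).
Local Notation "'nrm' x" := (@bs_norm Y x) (at level 10, x at level 9).
Local Notation "0v" := (@bs_zero Y).
Local Notation lc := (lincomb Y).

Variable P : nat -> Y -> Y.
Hypothesis HPr : forall N, exists r V, forall y, span Y V r (P N y).
Hypothesis HPc : forall y, conv Y (fun N => P N y) y.

Definition rVof (N : nat) : nat * (nat -> Y) :=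
  epsilon (inhabits (O, fun _ => 0v)) (fun p => forall y, span Y (snd p) (fst p) (P N y)).
Lemma rVof_spec N y : span Y (snd (rVof N)) (fst (rVof N)) (P N y).
Proof.
  unfold rVof. apply (epsilon_spec (inhabits (O, fun _ => 0v)) (fun p => forall y, span Y (snd p) (fst p) (P N y))).
  destruct (HPr N) as [r [V HV]]. exists (r, V). exact HV.
Qed.

Definition ys (n : nat) : Y :=
  let (N, rest) := Cantor.of_nat n in let (M, code) := Cantor.of_nat rest in
  lc (fun j => coefp M (nth_code code j)) (snd (rVof N)) (fst (rVof N)).

Lemma ys_dense z eps : 0 < eps -> exists i, nrm (z +v -v ys i) < eps.
Proof.
  intro Heps. destruct (HPc z (eps / 2)) as [N HN]. lra. specialize (HN N (le_n N)).
  unfold Defs.dist in HN. rewrite norm_sub_sym in HN.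
  set (r := fst (rVof N)). set (V := snd (rVof N)).
  destruct (rVof_spec N z) as [c Ec]. fold r V in Ec.
  set (Sm := Rsum (fun j => nrm (V j)) r + 1).
  assert (HSm : 0 < Sm). { unfold Sm. assert (0 <= Rsum (fun j => nrm (V j)) r) by (apply Rsum_nonneg; intros; apply norm_ge0). lra. }
  destruct (archimed_cor1 (eps / (2 * Sm))) as [M0 [HM0 HM0p]]. apply Rdiv_lt_0_compat; lra.
  destruct M0 as [|M]. lia.
  set (t := fun j => epsilon (inhabits O) (fun p => Rabs (c j - coefp M p) <= / INR (S M))).
  assert (Ht : forall j, Rabs (c j - coefp M (t j)) <= / INR (S M)).
  { intro j. unfold t. apply (epsilon_spec (inhabits O) (fun p => Rabs (c j - coefp M p) <= / INR (S M))). apply approx. }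
  destruct (encode t r) as [code Hcode].
  exists (Cantor.to_nat (N, Cantor.to_nat (M, code))).
  unfold ys. rewrite !Cantor.cancel_of_to. fold r V.
  pose proof (norm_sub_tri Y z (P N z) (lc (fun j => coefp M (nth_code code j)) V r)) as T1.
  rewrite Ec in T1 at 2. rewrite <- lc_sub in T1.
  pose proof (norm_lc Y (fun i => c i - coefp M (nth_code code i)) V r) as T2.
  assert (T3 : Rsum (fun i => Rabs (c i - coefp M (nth_code code i)) * nrm (V i)) r <= Rsum (fun i => / INR (S M) * nrm (V i)) r).
  { apply Rsum_le. intros i Hi. rewrite Hcode by exact Hi. apply Rmult_le_compat_r. apply norm_ge0. apply Ht. }
  rewrite Rsum_scal in T3.
  assert (T4 : / INR (S M) * Rsum (fun i => nrm (V i)) r <= eps / 2).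
  { apply Rle_trans with (eps / (2 * Sm) * Sm).
    - apply Rmult_le_compat; try lra. left; apply Rinv_0_lt_compat, lt_0_INR; lia.
      apply Rsum_nonneg; intros; apply norm_ge0. unfold Sm; lra.
    - right. field. lra. }
  lra.
Qed.

Variable X : Y -> Prop.
Hypothesis X0 : X 0v.

Definition gs (n : nat) : Y :=
  let (i, m) := Cantor.of_nat n in
  epsilon (inhabits 0v) (fun x => X x /\ (nrm (ys i +v -v x) < / INR (S m) \/
     ~ exists x', X x' /\ nrm (ys i +v -v x') < / INR (S m))).

Lemma gs_spec n : let (i, m) := Cantor.of_nat n in X (gs n) /\ (nrm (ys i +v -v gs n) < / INR (S m) \/
     ~ exists x', X x' /\ nrm (ys i +v -v x') < / INR (S m)).
Proof.
  unfold gs. destruct (Cantor.of_nat n) as [i m].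
  apply (epsilon_spec (inhabits 0v) (fun x => X x /\ (nrm (ys i +v -v x) < / INR (S m) \/
     ~ exists x', X x' /\ nrm (ys i +v -v x') < / INR (S m)))).
  destruct (classic (exists x', X x' /\ nrm (ys i +v -v x') < / INR (S m))) as [[x' [H1 H2]]|Hn].
  - exists x'. auto.
  - exists 0v. auto.
Qed.

Lemma gs_X n : X (gs n).
Proof. pose proof (gs_spec n). destruct (Cantor.of_nat n). tauto. Qed.

Lemma gs_dense z eps : X z -> 0 < eps -> exists n, Defs.dist z (gs n) < eps.
Proof.
  intros Hz Heps. destruct (archimed_cor1 (eps / 2)) as [M0 [HM0 HM0p]]. lra.
  destruct M0 as [|m]. lia.
  destruct (ys_dense z (/ INR (S m))) as [i Hi]. apply Rinv_0_lt_compat, lt_0_INR; lia.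
  exists (Cantor.to_nat (i, m)). pose proof (gs_spec (Cantor.to_nat (i, m))) as G.
  rewrite Cantor.cancel_of_to in G. destruct G as [_ [G|G]].
  - unfold Defs.dist. pose proof (norm_sub_tri Y z (ys i) (gs (Cantor.to_nat (i, m)))). lra.
  - exfalso. apply G. exists z. split; [exact Hz|]. rewrite norm_sub_sym. exact Hi.
Qed.
End Dense.


Section FDDfacts.
Variable Y : BanachSpace.
Local Notation "x +v y" := (@bs_add Y x y) (at level 50, left associativity).
Local Notation "-v x" := (@bs_opp Y x) (at level 35, right associativity).
Local Notation "a *v x" := (@bs_scal Y a x) (at level 40).
Local Notation "'nrm' x" := (@bs_norm Y x) (at level 10, x at level 9).
Local Notation "0v" := (@bs_zero Y).
Local Notation lc := (lincomb Y).

Lemma bounded_add (A B : Y -> Y) : bounded_operator Y A -> bounded_operator Y B -> bounded_operator Y (fun y => A y +v B y).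
Proof.
  intros [[HA1 HA2] HAb] [[HB1 HB2] HBb]. split; [split|].
  - intros x y. rewrite HA1, HB1. apply add4.
  - intros a x. rewrite HA2, HB2, bs_scal_distr_l. reflexivity.
  - destruct (bounded_pos Y A HAb) as [C1 [_ H1]]. destruct (bounded_pos Y B HBb) as [C2 [_ H2]].
    exists (C1 + C2). intro x. eapply Rle_trans; [apply bs_norm_triangle|]. specialize (H1 x). specialize (H2 x). lra.
Qed.

Lemma bounded_comp (A B : Y -> Y) : bounded_operator Y A -> bounded_operator Y B -> bounded_operator Y (fun y => A (B y)).
Proof.
  intros [[HA1 HA2] HAb] [[HB1 HB2] HBb]. split; [split|].
  - intros x y. rewrite HB1, HA1. reflexivity.
  - intros a x. rewrite HB2, HA2. reflexivity.
  - destruct (bounded_pos Y A HAb) as [C1 [HC1 H1]]. destruct (bounded_pos Y B HBb) as [C2 [_ H2]].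
    exists (C1 * C2). intro x. eapply Rle_trans; [apply H1|]. rewrite Rmult_assoc. apply Rmult_le_compat_l; [lra|]. apply H2.
Qed.

Lemma bounded_zero : bounded_operator Y (fun _ => 0v).
Proof. split; [split|]. intros; rewrite bs_add_zero; reflexivity. intros; rewrite scal0r; reflexivity.
  exists 0. intro. rewrite norm0. lra. Qed.

Definition cat (V : nat -> Y) r (W : nat -> Y) := fun i => if Nat.ltb i r then V i else W (i - r)%nat.

Lemma lc_cat c d V r W t : lc (fun i => if Nat.ltb i r then c i else d (i - r)%nat) (cat V r W) (r + t) = lc c V r +v lc d W t.
Proof.
  induction t.
  - rewrite Nat.add_0_r, bs_add_zero. apply lc_ext. intros i Hi. unfold cat. destruct (Nat.ltb_spec i r); [|lia]. auto.
  - rewrite Nat.add_succ_r. simpl. rewrite IHt, <- addA. f_equal. f_equal.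
    unfold cat. destruct (Nat.ltb_spec (r + t) r); [lia|]. replace (r + t - r)%nat with t by lia. reflexivity.
Qed.

Variable Q : nat -> Y -> Y.
Hypothesis hQ : is_FDD Y Q.

Definition PP (N : nat) (y : Y) := psum Y Q y N.

Lemma Q_bo j : bounded_operator Y (Q j).
Proof. destruct hQ as [H _]. apply (H j). Qed.
Lemma Q_lin j : is_linear Y (Q j).
Proof. apply Q_bo. Qed.
Lemma Q_idem j x : Q j (Q j x) = Q j x.
Proof. destruct hQ as [H _]. apply (H j). Qed.
Lemma Q_orth i j x : i <> j -> Q i (Q j x) = 0v.
Proof. destruct hQ as [_ [H _]]. intro; apply H; assumption. Qed.

Lemma PP_bo N : bounded_operator Y (PP N).
Proof.
  induction N. apply bounded_zero.
  apply (bounded_add (PP N) (Q N)); [exact IHN | apply Q_bo].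
Qed.

Lemma PP_conv y : conv Y (fun N => PP N y) y.
Proof. destruct hQ as [_ [_ H]]. apply H. Qed.

Lemma PP_span N : exists r V, forall y, span Y V r (PP N y).
Proof.
  induction N.
  - exists O, (fun _ => 0v). intro y. apply span_zero.
  - destruct IHN as [r [V HV]]. destruct hQ as [Hp _]. destruct (Hp N) as [_ [[t [W HW]] _]].
    exists (r + t)%nat, (cat V r W). intro y. destruct (HV y) as [c Ec]. destruct (HW y) as [d Ed].
    exists (fun i => if Nat.ltb i r then c i else d (i - r)%nat). rewrite lc_cat. unfold PP. simpl.
    fold (PP N y). rewrite Ec, Ed. reflexivity.
Qed.

Lemma Q_PP i N y : Q i (PP N y) = if Nat.ltb i N then Q i y else 0v.
Proof.
  induction N.
  { unfold PP; simpl. destruct (Nat.ltb_spec i 0); [lia|]. apply lin_zero, Q_lin. }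
  change (PP (S N) y) with (PP N y +v Q N y). rewrite (proj1 (Q_lin i)). rewrite IHN.
  destruct (Nat.eq_dec i N) as [->|Hne].
  - rewrite Q_idem. destruct (Nat.ltb_spec N N); [lia|]. destruct (Nat.ltb_spec N (S N)); [|lia]. apply add0l.
  - rewrite Q_orth by exact Hne. rewrite bs_add_zero.
    destruct (Nat.ltb_spec i N), (Nat.ltb_spec i (S N)); try lia; reflexivity.
Qed.

Lemma PP_vs N y : PP N y = vs Y (fun k => Q k y) N.
Proof. induction N; simpl. reflexivity. unfold PP in *. simpl. rewrite IHN. reflexivity. Qed.

Lemma PP_PP m n y : (n <= m)%nat -> PP m (PP n y) = PP n y.
Proof.
  intro H. rewrite (PP_vs m (PP n y)). transitivity (vs Y (fun k => Q k y) n); [|symmetry; apply PP_vs]. rewrite (vs_ext Y _ (fun k => if Nat.ltb k n then Q k y else 0v)).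
  2: { intros k _. rewrite Q_PP. reflexivity. }
  rewrite (vs_zero_tail Y _ n m). 2: { intros k Hk. destruct (Nat.ltb_spec k n); [lia|reflexivity]. } 2: exact H.
  apply vs_ext. intros k Hk. destruct (Nat.ltb_spec k n); [reflexivity|lia].
Qed.

Definition Einf (e : Y) := exists n, PP n e = e.

Lemma Einf_mono e n m : PP n e = e -> (n <= m)%nat -> PP m e = e.
Proof. intros H Hm. rewrite <- H. rewrite PP_PP by exact Hm. reflexivity. Qed.

Lemma Einf_add x y : Einf x -> Einf y -> Einf (x +v y).
Proof.
  intros [n Hn] [m Hm]. exists (max n m). rewrite (proj1 (proj1 (PP_bo _))).
  rewrite (Einf_mono x n), (Einf_mono y m); auto; lia.
Qed.
Lemma Einf_scal a x : Einf x -> Einf (a *v x).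
Proof. intros [n Hn]. exists n. rewrite (proj2 (proj1 (PP_bo _))), Hn. reflexivity. Qed.
Lemma Einf_zero : Einf 0v.
Proof. exists O. reflexivity. Qed.
Lemma Einf_lc c v n : (forall i, (i < n)%nat -> Einf (v i)) -> Einf (lc c v n).
Proof.
  induction n; intro H; simpl. apply Einf_zero.
  apply Einf_add. apply IHn; intros; apply H; lia. apply Einf_scal, H; lia.
Qed.
End FDDfacts.


Section Main.
Variable Y : BanachSpace.
Local Notation "x +v y" := (@bs_add Y x y) (at level 50, left associativity).
Local Notation "-v x" := (@bs_opp Y x) (at level 35, right associativity).
Local Notation "a *v x" := (@bs_scal Y a x) (at level 40).
Local Notation "'nrm' x" := (@bs_norm Y x) (at level 10, x at level 9).
Local Notation "0v" := (@bs_zero Y).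
Local Notation lc := (lincomb Y).

Variable Q : nat -> Y -> Y.
Hypothesis hQ : is_FDD Y Q.
Variable X : Y -> Prop.
Hypothesis hX : closed_subspace Y X.
Variable eps : R.
Hypothesis Heps : 0 < eps /\ eps <= / 2.

Local Notation P := (PP Y Q).

Definition g := gs Y P X.
Definition Dep k := span Y g k (g k).

Definition Phiprop k (p : (Y -> R) * R) :=
  flin Y (fst p) /\ 0 < snd p /\ (forall x, Rabs (fst p x) <= snd p * nrm x) /\
  (forall i, (i < k)%nat -> fst p (g i) = 0) /\ (~ Dep k -> fst p (g k) = 1).
Definition Phi k := epsilon (inhabits ((fun _ : Y => 0), 1)) (Phiprop k).

Lemma Phi_spec k : Phiprop k (Phi k).
Proof.
  unfold Phi. apply (epsilon_spec (inhabits ((fun _ : Y => 0), 1)) (Phiprop k)).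
  destruct (classic (Dep k)) as [Hd|Hd].
  - exists ((fun _ : Y => 0), 1). unfold Phiprop; simpl. split; [split|].
    intros; ring. intros; ring. split. lra. split. intro x. rewrite Rabs_R0. pose proof (norm_ge0 Y x). lra.
    split. auto. tauto.
  - destruct (func' Y P (PP_bo Y Q hQ) (PP_span Y Q hQ) (PP_conv Y Q hQ) g k (g k) Hd) as [f [Hf [[C [HC HCb]] [H0 H1]]]].
    exists (f, C). unfold Phiprop; simpl. repeat split; auto; apply Hf.
Qed.

Definition phi k := fst (Phi k).
Definition Cphi k := snd (Phi k).
Lemma phi_lin k : flin Y (phi k). Proof. apply (Phi_spec k). Qed.
Lemma Cphi_pos k : 0 < Cphi k. Proof. apply (Phi_spec k). Qed.
Lemma phi_bnd k x : Rabs (phi k x) <= Cphi k * nrm x. Proof. apply (Phi_spec k). Qed.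
Lemma phi_van k i : (i < k)%nat -> phi k (g i) = 0. Proof. apply (Phi_spec k). Qed.
Lemma phi_one k : ~ Dep k -> phi k (g k) = 1. Proof. apply (Phi_spec k). Qed.

Definition bnd k := eps * (/ 2) ^ (S k) / Cphi k.
Lemma bnd_pos k : 0 < bnd k.
Proof. unfold bnd. apply Rdiv_lt_0_compat; [apply Rmult_lt_0_compat; [lra|apply pow_lt; lra]|apply Cphi_pos]. Qed.

Definition mk k r := epsilon (inhabits O) (fun m => nrm (r +v -v P m r) <= bnd k).
Lemma mk_spec k r : nrm (r +v -v P (mk k r) r) <= bnd k.
Proof.
  unfold mk. apply (epsilon_spec (inhabits O) (fun m => nrm (r +v -v P m r) <= bnd k)).
  destruct (PP_conv Y Q hQ r (bnd k) (bnd_pos k)) as [N HN]. exists N. specialize (HN N (le_n N)).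
  unfold Defs.dist in HN. rewrite norm_sub_sym. lra.
Qed.

Definition newu k (prev : nat -> Y) :=
  let r := g k +v -v lc (fun j => phi j (g k)) prev k in r +v -v P (mk k r) r.

Fixpoint U (k : nat) : nat -> Y :=
  match k with O => fun _ => 0v | S k' => upd Y (U k') k' (newu k' (U k')) end.
Definition u k := U (S k) k.

Lemma U_u k j : (j < k)%nat -> U k j = u j.
Proof.
  induction k; intro H. lia. simpl. unfold upd. destruct (Nat.eqb_spec j k) as [->|Hne].
  - unfold u. simpl. unfold upd. rewrite Nat.eqb_refl. reflexivity.
  - apply IHk. lia.
Qed.

Definition rr k := g k +v -v lc (fun j => phi j (g k)) u k.
Lemma u_eq k : u k = rr k +v -v P (mk k (rr k)) (rr k).
Proof.
  unfold u at 1. simpl. unfold upd. rewrite Nat.eqb_refl. unfold newu.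
  assert (E : lc (fun j => phi j (g k)) (U k) k = lc (fun j => phi j (g k)) u k).
  { apply lc_ext. intros i Hi. split; [reflexivity|]. apply U_u; exact Hi. }
  rewrite E. reflexivity.
Qed.
Lemma u_bound k : nrm (u k) <= bnd k.
Proof. rewrite u_eq. apply mk_spec. Qed.

Definition aa k x := phi k x *v u k.
Lemma aa_lin k : is_linear Y (aa k).
Proof.
  unfold aa. split.
  - intros x y. rewrite (proj1 (phi_lin k)), bs_scal_distr_r. reflexivity.
  - intros c x. rewrite (proj2 (phi_lin k)), bs_scal_assoc. reflexivity.
Qed.
Lemma aa_bnd k x : nrm (aa k x) <= eps / 2 * nrm x * (/ 2) ^ k.
Proof.
  unfold aa. rewrite bs_norm_scal. pose proof (phi_bnd k x). pose proof (u_bound k).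
  pose proof (Cphi_pos k). pose proof (norm_ge0 Y x). pose proof (norm_ge0 Y (u k)).
  pose proof (Rabs_pos (phi k x)).
  apply Rle_trans with (Cphi k * nrm x * bnd k).
  - apply Rmult_le_compat; assumption.
  - unfold bnd. right. simpl. field. lra.
Qed.

Lemma vs_lc c v n : vs Y (fun j => c j *v v j) n = lc c v n.
Proof. induction n; simpl. reflexivity. rewrite IHn. reflexivity. Qed.

Lemma Dep_lc k : Dep k -> exists c, g k = lc c g k.
Proof. intro H. exact H. Qed.

Lemma main_eps : exists T Tinv : Y -> Y,
    bounded_operator Y T /\ is_inverse_op Y T Tinv /\
    (forall x, nrm (T x +v -v x) <= eps / (1 - eps) * nrm x) /\
    is_FDD Y (fun j y => T (Q j (Tinv y))) /\
    density_condition Y X (fun j y => T (Q j (Tinv y))).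
Proof.
  destruct (series_op Y aa (eps / 2) (/ 2) aa_lin ltac:(lra) ltac:(lra) aa_bnd) as [R [HR [HRc HRt]]].
  assert (HRb : forall x, nrm (R x) <= eps * nrm x).
  { intro x. specialize (HRt x O). simpl in HRt. rewrite opp0, bs_add_zero in HRt.
    eapply Rle_trans; [exact HRt|]. right. field. }
  destruct (neumann Y R eps HR ltac:(lra) HRb) as [T [HT [HTS [HST HTI]]]].
  set (Sop := fun x => x +v -v R x).
  assert (HS : bounded_operator Y Sop).
  { destruct HR as [[HR1 HR2] _]. split; [split|].
    - intros x y. unfold Sop. rewrite HR1, opp_add. apply add4.
    - intros a x. unfold Sop. rewrite HR2. apply sub_scal.
    - exists (1 + eps). intro x. unfold Sop. eapply Rle_trans; [apply bs_norm_triangle|].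
      rewrite norm_opp. specialize (HRb x). lra. }
  assert (Hkey : forall k, Einf Y Q (Sop (g k))).
  { intro k. induction k as [k IH] using (well_founded_induction Wf_nat.lt_wf).
    destruct (classic (Dep k)) as [Hd|Hd].
    - destruct Hd as [c Ec]. rewrite Ec. rewrite (lc_lin Y Sop) by apply HS.
      apply (Einf_lc Y Q hQ). intros i Hi. apply IH. exact Hi.
    - set (m := mk k (rr k)).
      assert (HRg : R (g k) = g k +v -v P m (rr k)).
      { apply (conv_unique Y (vs Y (fun j => aa j (g k)))). apply HRc.
        apply (conv_ext Y (fun _ => g k +v -v P m (rr k))); [|apply conv_const].
        exists (S k). intros n Hn. symmetry. rewrite (vs_zero_tail Y _ (S k) n).
        2: { intros j Hj. unfold aa. rewrite phi_van by lia. apply scal0l. }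
        2: exact Hn.
        simpl. unfold aa at 2. rewrite phi_one by exact Hd. rewrite bs_scal_one.
        unfold aa. rewrite vs_lc. rewrite u_eq. fold m. unfold rr. apply add_sub_cancel. }
      exists m. unfold Sop. rewrite HRg, sub_sub_cancel. apply PP_PP. exact hQ. lia. }
  assert (HpsT : forall x n, psum Y (fun j y => T (Q j (Sop y))) x n = T (P n (Sop x))).
  { intros x n. induction n; simpl.
    - symmetry. apply lin_zero, HT.
    - rewrite IHn. unfold PP. simpl. symmetry. apply (proj1 (proj1 HT)). }
  exists T, Sop. split; [exact HT|]. split; [|split; [|split]].
  - split; [exact HS|]. split; intro x; unfold Sop.
    + apply HST.
    + apply HTS.
  - exact HTI.
  - split; [|split].
    + intro j. split; [|split].
      * apply bounded_comp; [exact HT|]. apply bounded_comp; [apply (Q_bo Y Q hQ)|exact HS].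
      * destruct hQ as [Hp _]. destruct (Hp j) as [_ [[n [v Hv]] _]].
        exists n, (fun i => T (v i)). intro x. destruct (Hv (Sop x)) as [c Ec]. exists c.
        rewrite Ec. apply lc_lin, HT.
      * intro x. simpl. unfold Sop at 1. fold (Sop (Q j (Sop x))). unfold Sop at 1.
        change ((fun x0 => x0 +v -v R x0) (T (Q j (Sop x)))) with (T (Q j (Sop x)) +v -v R (T (Q j (Sop x)))).
        rewrite HST, (Q_idem Y Q hQ). reflexivity.
    + intros i j Hij x. change (Sop (T (Q j (Sop x)))) with (T (Q j (Sop x)) +v -v R (T (Q j (Sop x)))).
      rewrite HST, (Q_orth Y Q hQ) by exact Hij. apply lin_zero, HT.
    + intro y.
      assert (H : conv Y (fun n => T (P n (Sop y))) (T (Sop y))).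
      { apply conv_op; [exact HT|]. apply (PP_conv Y Q hQ). }
      replace (T (Sop y)) with y in H by (symmetry; apply HTS).
      eapply conv_fun_eq; [|exact H]. intro n; symmetry; apply HpsT.
  - exists (fun x => X x /\ exists n, psum Y (fun j y => T (Q j (Sop y))) x n = x).
    split; [|split].
    + intros x [Hx _]. exact Hx.
    + intros x Hx e He. destruct (gs_dense Y P (PP_span Y Q hQ) (PP_conv Y Q hQ) X (proj1 hX) x e Hx He) as [n Hn].
      exists (g n). split; [|exact Hn]. split. unfold g. apply gs_X, (proj1 hX).
      destruct (Hkey n) as [m Hm]. exists m. rewrite HpsT, Hm. unfold Sop. apply HTS.
    + intros x [_ [n H]]. exists n. symmetry. exact H.
Qed.
End Main.


Theorem lemma3p1 (Y : BanachSpace) (Q : nat -> Y -> Y) (X : Y -> Prop)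
  (hQ : is_FDD Y Q) (hX : closed_subspace Y X) (delta : R) (hdelta : 0 < delta) :
  exists (T Tinv : Y -> Y),
    bounded_operator Y T /\ is_inverse_op Y T Tinv /\
    opnorm_T_minus_I_lt Y T delta /\
    is_FDD Y (fun j y => T (Q j (Tinv y))) /\
    density_condition Y X (fun j y => T (Q j (Tinv y))).
Proof.
  set (e := Rmin (/ 2) (delta / 4)).
  assert (He : 0 < e /\ e <= / 2).
  { unfold e. split. apply Rmin_pos; lra. apply Rmin_l. }
  assert (He2 : e <= delta / 4) by apply Rmin_r.
  destruct (main_eps Y Q hQ X hX e He) as [T [Tinv [H1 [H2 [H3 [H4 H5]]]]]].
  exists T, Tinv. split; [exact H1|]. split; [exact H2|]. split; [|split; assumption].
  exists (e / (1 - e)). split; [|exact H3].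
  apply Rle_lt_trans with (2 * e).
  - apply (Rmult_le_reg_r (1 - e)). lra. unfold Rdiv. rewrite Rmult_assoc, Rinv_l, Rmult_1_r by lra. nra.
  - lra.
Qed.
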